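(* Let $d \ge 2$ and $\lambda > 0$. Consider the TransE model, in which each entity $e$ is assigned a vector $\vec{e} \in \mathbb{R}^d$ and each relation $r$ a vector $\vec{r} \in \mathbb{R}^d$, and declare a fact $(e_1, r, e_2)$ valid, i.e. $(e_1,r,e_2) \in P$, if and only if $\|\vec{e_1} + \vec{r} - \vec{e_2}\| \le \lambda$ (Euclidean norm). Then none of the following three implications holds for all TransE embeddings: (R1) if $r$ is reflexive on a set $\Delta$ of entities, then $r$ is symmetric on $\Delta$; (R2) if $r$ is reflexive on a set $\Delta$ of entities, then $r$ is transitive on $\Delta$; (R3) if an entity $e_1$ has relation $r$ with every entity in a set $\Delta$ of entities and an entity $e_2$ has relation $r$ with one of the entities in $\Delta$, then $e_2$ has relation $r$ with every entity in $\Delta$. That is, for each of (R1), (R2), (R3) there exist entity vectors and a relation vector in $\mathbb{R}^d$ such that, with $P$ defined by the threshold $\lambda$, the hypothesis of the implication is satisfied but its conclusion fails.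
   Context: A relation $r$ is reflexive on a set $E$ of entities if $(e,r,e) \in P$ for all $e \in E$; symmetric on $E$ if $(e_1,r,e_2)\in P \iff (e_2,r,e_1)\in P$ for all $e_1,e_2 \in E$; transitive on $E$ if $(e_1,r,e_2)\in P$ and $(e_2,r,e_3)\in P$ imply $(e_1,r,e_3)\in P$ for all $e_1,e_2,e_3 \in E$. The TransE implausibility score of a fact $(s,r,o)$ is $\|\vec{s}+\vec{r}-\vec{o}\|$. *)

(* Defs.v *)
From HB Require Import structures.
From mathcomp Require Import all_boot all_order all_algebra.
From mathcomp Require Import reals.
Set Implicit Arguments. Unset Strict Implicit. Unset Printing Implicit Defensive.
Import Order.TTheory GRing.Theory Num.Theory.
Local Open Scope ring_scope.

Definition eucl_norm (R : realType) (d : nat) (v : 'rV[R]_d) : R :=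
  Num.sqrt (\sum_(i < d) v ord0 i ^+ 2).

Definition transE_valid (R : realType) (d : nat) (E : Type) (lambda : R)
  (emb : E -> 'rV[R]_d) (r : 'rV[R]_d) (e1 e2 : E) : Prop :=
  eucl_norm (emb e1 + r - emb e2) <= lambda.

Definition reflexive_on (E : Type) (P : E -> E -> Prop) (D : E -> Prop) : Prop :=
  forall e, D e -> P e e.
Definition symmetric_on (E : Type) (P : E -> E -> Prop) (D : E -> Prop) : Prop :=
  forall e1 e2, D e1 -> D e2 -> (P e1 e2 <-> P e2 e1).
Definition transitive_on (E : Type) (P : E -> E -> Prop) (D : E -> Prop) : Prop :=
  forall e1 e2 e3, D e1 -> D e2 -> D e3 -> P e1 e2 -> P e2 e3 -> P e1 e3.

(* Main.v *)
Require Import Defs.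
From HB Require Import structures.
From mathcomp Require Import all_boot all_order all_algebra.
From mathcomp Require Import reals.
From mathcomp Require Import lra.
Import Order.TTheory GRing.Theory Num.Theory.
Local Open Scope ring_scope.

Definition vx (R : realType) (d : nat) (a : R) : 'rV[R]_d :=
  \row_(i < d) (if (i : nat) == 0%N then a else 0).
Arguments vx {R} d a.

Lemma norm_vx (R : realType) (d : nat) (a : R) : (0 < d)%N ->
  eucl_norm (vx d a) = `|a|.
Proof.
move=> d0; rewrite /eucl_norm (bigD1 (Ordinal d0)) //= big1 ?addr0.
  by rewrite !mxE /= sqrtr_sqr.
move=> i /eqP Hi; rewrite !mxE; case: ifP => [/eqP h|_]; last by rewrite expr0n.
by exfalso; apply: Hi; apply: val_inj.
Qed.

Lemma vx_lin (R : realType) (d : nat) (a b c : R) :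
  vx d a + vx d b - vx d c = vx d (a + b - c).
Proof.
apply/rowP => i; rewrite !mxE; case: ifP => _ //; by rewrite subr0 addr0.
Qed.

Lemma valid_iff (R : realType) (d : nat) (lambda : R) (i j : 'I_3) :
  (0 < d)%N ->
  transE_valid lambda (fun k : 'I_3 => vx d (2 * lambda * (k : nat)%:R)) (vx d lambda) i j
  <-> `|2 * lambda * (i : nat)%:R + lambda - 2 * lambda * (j : nat)%:R| <= lambda.
Proof. by move=> d0; rewrite /transE_valid vx_lin norm_vx. Qed.
Arguments valid_iff {R d} lambda i j.
Arguments norm_vx {R d} a.

Theorem lemma1 (R : realType) (d : nat) (lambda : R) :
  (2 <= d)%N -> 0 < lambda ->
  (* (R1) fails *)
  (exists (n : nat) (emb : 'I_n -> 'rV[R]_d) (r : 'rV[R]_d) (D : 'I_n -> Prop),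
      reflexive_on (transE_valid lambda emb r) D /\
      ~ symmetric_on (transE_valid lambda emb r) D) /\
  (* (R2) fails *)
  (exists (n : nat) (emb : 'I_n -> 'rV[R]_d) (r : 'rV[R]_d) (D : 'I_n -> Prop),
      reflexive_on (transE_valid lambda emb r) D /\
      ~ transitive_on (transE_valid lambda emb r) D) /\
  (* (R3) fails *)
  (exists (n : nat) (emb : 'I_n -> 'rV[R]_d) (r : 'rV[R]_d) (D : 'I_n -> Prop)
          (e1 e2 : 'I_n),
      (forall e, D e -> transE_valid lambda emb r e1 e) /\
      (exists e, D e /\ transE_valid lambda emb r e2 e) /\
      ~ (forall e, D e -> transE_valid lambda emb r e2 e)).
Proof.
move=> d2 lp.
have d0 : (0 < d)%N by apply: leq_trans d2.
set emb := (fun k : 'I_3 => vx d (2 * lambda * (k : nat)%:R)).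
pose o0 := @Ordinal 3 0 isT.
pose o1 := @Ordinal 3 1 isT.
pose o2 := @Ordinal 3 2 isT.
have refl : forall i, transE_valid lambda emb (vx d lambda) i i.
  move=> i; apply/(valid_iff _ _ _ d0).
  by rewrite addrAC subrr add0r ger0_norm // ltW.
have P01 : transE_valid lambda emb (vx d lambda) o0 o1.
  apply/(valid_iff _ _ _ d0) => /=.
  rewrite (_ : _ + _ - _ = - lambda); last by lra.
  by rewrite normrN ger0_norm // ltW.
have P12 : transE_valid lambda emb (vx d lambda) o1 o2.
  apply/(valid_iff _ _ _ d0) => /=.
  rewrite (_ : _ + _ - _ = - lambda); last by lra.
  by rewrite normrN ger0_norm // ltW.
have nP10 : ~ transE_valid lambda emb (vx d lambda) o1 o0.
  move/(valid_iff _ _ _ d0) => /=.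
  rewrite (_ : _ + _ - _ = 3 * lambda); last by lra.
  rewrite ger0_norm; lra.
have nP02 : ~ transE_valid lambda emb (vx d lambda) o0 o2.
  move/(valid_iff _ _ _ d0) => /=.
  rewrite (_ : _ + _ - _ = - (3 * lambda)); last by lra.
  rewrite normrN ger0_norm; lra.
split; [|split].
- exists 3, emb, (vx d lambda), (fun _ => True); split; first by move=> i _; apply: refl.
  move=> H; apply: nP10; by apply/(H o0 o1 I I).
- exists 3, emb, (vx d lambda), (fun _ => True); split; first by move=> i _; apply: refl.
  move=> H; apply: nP02; exact: (H o0 o1 o2 I I I P01 P12).
- exists 3, emb, (vx d lambda), (fun e : 'I_3 => (e : nat) <= 1)%N, o0, o1.
  split; [|split].
  + move=> e He; have [->|->] : e = o0 \/ e = o1; last 2 first.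
    * exact: refl.
    * exact: P01.
    * case: e He => m Hm He; case: m Hm He => [|[|m]] Hm He.
      - by left; apply: val_inj.
      - by right; apply: val_inj.
      - by [].
  + by exists o1; split; [| apply: refl].
  + by move=> H; apply: nP10; apply: (H o0).
Qed.
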